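(* Let $p$ be an odd prime and $k$ a positive integer. Then $v_p(g_{k,U})=\sum_{\ell=1}^\infty\Big(\Big[\frac{k^2}{p^\ell}\Big]+(2k-p^\ell)\Big[\frac{k-1}{p^\ell}\Big]+\Big(\frac{p^\ell}{2}-2k\Big)\Big[\frac{2k-1}{p^\ell}\Big]-p^\ell\Big[\frac{k-1}{p^\ell}\Big]^2+\frac{p^\ell}{2}\Big[\frac{2k-1}{p^\ell}\Big]^2\Big)$ and $v_p(g_{k,O})=\sum_{\ell=1}^\infty\Big(\Big[\frac{\frac12k(k-1)}{p^\ell}\Big]-\big(k-\tfrac12\big)\Big[\frac{2k-3}{p^\ell}\Big]_2+\frac{p^\ell}{2}\Big[\frac{2k-3}{p^\ell}\Big]_2^2\Big)$.
   Context: $v_p(n)$ is the exponent of $p$ in the rational number $n$; $[x]$ is the floor of $x$; $[x]_2=\big[\tfrac12([x]+1)\big]$. Let $B_U(\lambda)=\lambda^2$, $B_O(\lambda)=\tfrac12\lambda(\lambda-1)$. Define $G_U(\lambda)=\lim_{N\to\infty}N^{-\lambda^2}\prod_{j=1}^{N}\frac{\Gamma(j)\Gamma(j+2\lambda)}{\Gamma(j+\lambda)^2}$, $G_O(\lambda)=\tfrac12\lim_{N\to\infty}N^{-\lambda(\lambda-1)/2}\,2^{2N\lambda}\prod_{j=1}^{N}\frac{\Gamma(N+j-1)\Gamma(j-\frac12+\lambda)}{\Gamma(N+j-1+\lambda)\Gamma(j-\frac12)}$, and $g_{\lambda,X}=\Gamma(1+B_X(\lambda))G_X(\lambda)$ for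 $X\in\{U,O\}$. *)

(* Defs.v *)
From Stdlib Require Import Reals ZArith Znumtheory.
From Coquelicot Require Import Coquelicot.
Open Scope R_scope.

Fixpoint prodR (f : nat -> R) (n : nat) : R :=
  match n with O => 1 | S m => prodR f m * f m end.

(* Euler's Gamma function, via Gauss' product formula
   Gamma(x) = lim_n n! n^x / (x (x+1) ... (x+n))   (x not a nonpositive integer). *)
Definition Gamma (x : R) : R :=
  real (Lim_seq (fun n => INR (fact n) * Rpower (INR n) x
                           / prodR (fun i => x + INR i) (S n))).

Definition B_U (l : R) : R := l ^ 2.
Definition B_O (l : R) : R := / 2 * l * (l - 1).

Definition G_U (l : R) : R :=
  real (Lim_seq (fun N => Rpower (INR N) (- (l ^ 2)) *
    prodR (fun i => let j := INR (S i) in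
             Gamma j * Gamma (j + 2 * l) / (Gamma (j + l)) ^ 2) N)).

Definition G_O (l : R) : R :=
  / 2 * real (Lim_seq (fun N => Rpower (INR N) (- (l * (l - 1) / 2)) *
    Rpower 2 (2 * INR N * l) *
    prodR (fun i => let j := INR (S i) in
             Gamma (INR N + j - 1) * Gamma (j - / 2 + l) /
             (Gamma (INR N + j - 1 + l) * Gamma (j - / 2))) N)).

Definition g_U (l : R) : R := Gamma (1 + B_U l) * G_U l.
Definition g_O (l : R) : R := Gamma (1 + B_O l) * G_O l.

(* p-adic valuation (as a relation): vp_is p x e  iff  x = p^e * a/b with
   a, b integers prime to p, i.e. x is a nonzero rational with v_p(x) = e. *)
Definition vp_is (p : nat) (x : R) (e : Z) : Prop :=
  exists a b : Z, (b <> 0)%Z /\ ~ (Z.of_nat p | a)%Z /\ ~ (Z.of_nat p | b)%Z /\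
    x = IZR a / IZR b * powerRZ (INR p) e.

(* floor [x]  (Int_part x = up x - 1 is the floor of x) *)
Definition fl (x : R) : Z := Int_part x.
Definition fl2 (x : R) : Z := fl (/ 2 * (IZR (fl x) + 1)).

Definition termU (p k l : nat) : R :=
  let q := INR p ^ l in let K := INR k in
  IZR (fl (K ^ 2 / q)) + (2 * K - q) * IZR (fl ((K - 1) / q))
  + (q / 2 - 2 * K) * IZR (fl ((2 * K - 1) / q))
  - q * (IZR (fl ((K - 1) / q))) ^ 2
  + q / 2 * (IZR (fl ((2 * K - 1) / q))) ^ 2.

Definition termO (p k l : nat) : R :=
  let q := INR p ^ l in let K := INR k in
  IZR (fl ((/ 2 * K * (K - 1)) / q))
  - (K - / 2) * IZR (fl2 ((2 * K - 3) / q))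
  + q / 2 * (IZR (fl2 ((2 * K - 3) / q))) ^ 2.

(* Main.v *)
Require Import Defs.
From Stdlib Require Import Reals ZArith Znumtheory.
From Coquelicot Require Import Coquelicot.
From Stdlib Require Import Lia Lra.
Open Scope R_scope.


Lemma prodR_S_l (f : nat -> R) n : prodR f (S n) = f 0%nat * prodR (fun i => f (S i)) n.
Proof. induction n; simpl in *. ring. rewrite IHn. ring. Qed.

Lemma prodR_ext (f g : nat -> R) n : (forall i, (i < n)%nat -> f i = g i) -> prodR f n = prodR g n.
Proof. induction n; intros H; simpl. reflexivity. rewrite IHn, H; [reflexivity|lia|intros; apply H; lia]. Qed.

Lemma prodR_mult (f g : nat -> R) n : prodR (fun i => f i * g i) n = prodR f n * prodR g n.
Proof. induction n; simpl. ring. rewrite IHn. ring. Qed.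

Lemma prodR_inv (f : nat -> R) n : prodR (fun i => / f i) n = / prodR f n.
Proof. induction n; simpl. field. rewrite IHn, Rinv_mult. ring. Qed.

Lemma prodR_div (f g : nat -> R) n : prodR (fun i => f i / g i) n = prodR f n / prodR g n.
Proof. unfold Rdiv. rewrite prodR_mult, prodR_inv. reflexivity. Qed.

Lemma prodR_const c n : prodR (fun _ => c) n = c ^ n.
Proof. induction n; simpl. reflexivity. rewrite IHn. ring. Qed.

Lemma prodR_tele (f : nat -> R) n : prodR (fun i => f (S i)) n * f 0%nat = prodR f n * f n.
Proof. induction n; simpl. ring. rewrite <- IHn. ring. Qed.

Lemma prodR_pos (f : nat -> R) n : (forall i, (i < n)%nat -> 0 < f i) -> 0 < prodR f n.
Proof. induction n; intros H; simpl. lra. apply Rmult_lt_0_compat. apply IHn; intros; apply H; lia. apply H; lia. Qed.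

Lemma prodR_plus (f : nat -> R) a b : prodR f (a + b) = prodR f a * prodR (fun m => f (a + m)%nat) b.
Proof. induction b; simpl. rewrite Nat.add_0_r. ring. rewrite Nat.add_succ_r. simpl. rewrite IHb. ring. Qed.

Lemma prodR_swap (f : nat -> nat -> R) n k :
  prodR (fun i => prodR (fun m => f i m) k) n = prodR (fun m => prodR (fun i => f i m) n) k.
Proof. induction n; simpl. rewrite prodR_const. rewrite pow1. reflexivity.
 rewrite IHn, <- prodR_mult. reflexivity. Qed.

Lemma prodR_lim (f : nat -> nat -> R) (c : nat -> R) k :
  (forall m, (m < k)%nat -> is_lim_seq (f m) (c m)) ->
  is_lim_seq (fun N => prodR (fun m => f m N) k) (prodR c k).
Proof. induction k; intros H; simpl. apply is_lim_seq_const.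
 apply is_lim_seq_mult'. apply IHk; intros; apply H; lia. apply H; lia. Qed.

Lemma INR_fact_shift a k : INR (fact (a + k)) = INR (fact a) * prodR (fun m => INR a + 1 + INR m) k.
Proof. induction k; simpl. rewrite Nat.add_0_r. ring.
 rewrite Nat.add_succ_r. change (fact (S (a + k))) with (S (a+k) * fact (a+k))%nat.
 rewrite mult_INR, IHk, S_INR, plus_INR. ring. Qed.

Lemma lim_inv_n : is_lim_seq (fun n => / INR n) 0.
Proof. assert (H := is_lim_seq_inv INR p_infty is_lim_seq_INR). simpl in H. apply H. discriminate. Qed.

Lemma lim_aff a b : is_lim_seq (fun n => a + b * / INR n) a.
Proof. assert (H := is_lim_seq_plus' _ _ a (b*0) (is_lim_seq_const a) (is_lim_seq_scal_l _ b 0 lim_inv_n)).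
 rewrite Rmult_0_r, Rplus_0_r in H. exact H. Qed.

Lemma lim_ratio a b : is_lim_seq (fun n => (a * INR n + b) / INR n) a.
Proof. apply is_lim_seq_ext_loc with (fun n => a + b * / INR n). exists 1%nat. intros n Hn.
 assert (0 < INR n) by (apply lt_0_INR; lia). field. lra. apply lim_aff. Qed.

Lemma lim_ratio_inv a : is_lim_seq (fun n => INR n / (INR n + a)) 1.
Proof. apply is_lim_seq_ext_loc with (fun n => / (1 + a * / INR n)).
 exists (S (Z.to_nat (up (Rabs a)))). intros n Hn.
 assert (H1: INR (S (Z.to_nat (up (Rabs a)))) <= INR n) by (apply le_INR; lia).
 rewrite S_INR in H1. destruct (archimed (Rabs a)) as [Ha _].
 assert (IZR (up (Rabs a)) <= INR (Z.to_nat (up (Rabs a)))).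
 { rewrite INR_IZR_INZ. apply IZR_le. rewrite Z2Nat.id. lia. apply le_IZR. assert (0 <= Rabs a) by apply Rabs_pos. lra. }
 assert (Rabs a < INR n) by lra. assert (- a <= Rabs a) by (rewrite <- Rabs_Ropp; apply Rle_abs).
 assert (a <= Rabs a) by apply Rle_abs. assert (0 < INR n) by lra.
 field. split; lra.
 assert (H := is_lim_seq_inv _ _ (lim_aff 1 a)). simpl in H. rewrite Rinv_1 in H. apply H.
 intro E; injection E; lra. Qed.

Definition gs (x : R) (n : nat) : R :=
  INR (fact n) * Rpower (INR n) x / prodR (fun i => x + INR i) (S n).

Lemma Gamma_lim x (g : R) : is_lim_seq (gs x) g -> Gamma x = g.
Proof. intros H. unfold Gamma. apply is_lim_seq_unique in H. unfold gs in H. rewrite H. reflexivity. Qed.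

Lemma gs_shift x (g : R) : 0 < x -> is_lim_seq (gs x) g -> is_lim_seq (gs (x + 1)) (x * g).
Proof. intros Hx H.
 apply is_lim_seq_ext_loc with (fun n => x * gs x n * (INR n / (INR n + (x + 1)))).
 exists 1%nat. intros n Hn. assert (Hn0 : 0 < INR n) by (apply lt_0_INR; lia).
 unfold gs. rewrite Rpower_plus, Rpower_1 by exact Hn0.
 assert (E : prodR (fun i => x + 1 + INR i) (S n) * x = prodR (fun i => x + INR i) (S n) * (x + INR n + 1)).
 { transitivity (prodR (fun i => x + INR i) (S (S n))).
   rewrite (prodR_S_l _ (S n)). replace (prodR (fun i => x + INR (S i)) (S n)) with (prodR (fun i => x + 1 + INR i) (S n)).
   simpl (INR 0). ring. apply prodR_ext. intros. rewrite S_INR. ring.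
   replace (prodR (fun i => x + INR i) (S (S n))) with (prodR (fun i => x + INR i) (S n) * (x + INR (S n))) by reflexivity.
   rewrite S_INR. ring. }
 assert (0 < prodR (fun i => x + 1 + INR i) (S n)).
 { apply prodR_pos. intros. assert (0 <= INR i) by apply pos_INR. lra. }
 assert (0 < prodR (fun i => x + INR i) (S n)).
 { apply prodR_pos. intros. assert (0 <= INR i) by apply pos_INR. lra. }
 set (A := prodR (fun i => x + 1 + INR i) (S n)) in *.
 set (B := prodR (fun i => x + INR i) (S n)) in *.
 replace A with (B * (x + INR n + 1) / x) by (apply (Rmult_eq_reg_r x); [rewrite E; field|]; lra).
 field. repeat split; lra.
 replace (x * g) with (x * g * 1) by ring.
 apply is_lim_seq_mult'. apply is_lim_seq_scal_l with (a := x) (lu := g). exact H.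
 apply lim_ratio_inv. Qed.

Lemma prodR_fact n : prodR (fun i => 1 + INR i) n = INR (fact n).
Proof. induction n; simpl prodR. reflexivity. rewrite IHn. change (fact (S n)) with (S n * fact n)%nat.
 rewrite mult_INR, S_INR. ring. Qed.

Lemma gs_int m : is_lim_seq (gs (INR (S m))) (INR (fact m)).
Proof. induction m.
 - simpl INR. simpl fact. apply is_lim_seq_ext_loc with (fun n => INR n / (INR n + 1)).
   exists 1%nat. intros n Hn. assert (0 < INR n) by (apply lt_0_INR; lia). unfold gs.
   rewrite Rpower_1 by lra. rewrite prodR_fact. change (fact (S n)) with (S n * fact n)%nat.
   rewrite mult_INR, S_INR. assert (0 < INR (fact n)) by (apply lt_0_INR; apply lt_O_fact). field. lra.
   replace (INR 1) with 1 by reflexivity. apply lim_ratio_inv.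
 - replace (INR (S (S m))) with (INR (S m) + 1) by (rewrite (S_INR (S m)); ring).
   replace (INR (fact (S m))) with (INR (S m) * INR (fact m)) by (rewrite <- mult_INR; reflexivity).
   apply gs_shift. apply lt_0_INR; lia. exact IHm. Qed.

Lemma Gamma_nat m : Gamma (INR (S m)) = INR (fact m).
Proof. apply Gamma_lim, gs_int. Qed.

Lemma gs_half_eq n : (0 < n)%nat ->
  gs (/2) n = INR (fact n) * sqrt (INR n) / prodR (fun i => /2 + INR i) (S n).
Proof. intros. unfold gs. rewrite Rpower_sqrt. reflexivity. apply lt_0_INR; lia. Qed.

Lemma sqrt_mul_sq a b : 0 <= a -> 0 <= b -> a * sqrt b = sqrt (a * a * b).
Proof. intros. rewrite sqrt_mult_alt by nra. rewrite sqrt_square by lra. reflexivity. Qed.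

Lemma half_prod_pos n : 0 < prodR (fun i => /2 + INR i) n.
Proof. apply prodR_pos. intros. assert (0 <= INR i) by apply pos_INR. lra. Qed.

Lemma gs_half_incr n : gs (/2) (S n) <= gs (/2) (S (S n)).
Proof. rewrite !gs_half_eq by lia.
 set (x := INR (S n)). assert (Hx: 1 <= x) by (unfold x; rewrite S_INR; assert (0 <= INR n) by apply pos_INR; lra).
 replace (INR (S (S n))) with (x + 1) by (unfold x; rewrite (S_INR (S n)); ring).
 change (fact (S (S n))) with (S (S n) * fact (S n))%nat. rewrite mult_INR.
 replace (INR (S (S n))) with (x + 1) by (unfold x; rewrite (S_INR (S n)); ring).
 change (prodR (fun i => /2 + INR i) (S (S (S n)))) with (prodR (fun i => /2 + INR i) (S (S n)) * (/2 + INR (S (S n)))).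
 replace (INR (S (S n))) with (x + 1) by (unfold x; rewrite (S_INR (S n)); ring).
 set (P := prodR (fun i => /2 + INR i) (S (S n))). assert (0 < P) by apply half_prod_pos.
 set (F := INR (fact (S n))). assert (0 < F) by (apply lt_0_INR; apply lt_O_fact).
 assert (sqrt x * (x + 3/2) <= (x+1) * sqrt (x+1)).
 { rewrite Rmult_comm, !sqrt_mul_sq by lra. apply sqrt_le_1_alt. nra. }
 assert (0 <= sqrt x) by apply sqrt_pos.
 apply Rmult_le_reg_r with (P * (/2 + (x+1))). nra.
 replace (F * sqrt x / P * (P * (/ 2 + (x + 1)))) with (F * (sqrt x * (x + 3/2))) by (field; lra).
 replace ((x + 1) * F * sqrt (x + 1) / (P * (/ 2 + (x + 1))) * (P * (/ 2 + (x + 1)))) with (F * ((x+1) * sqrt (x+1))) by (field; lra).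
 apply Rmult_le_compat_l; lra. Qed.

Definition rs n := INR (fact n) * sqrt (INR n + 1) / prodR (fun i => /2 + INR i) (S n).

Lemma rs_bound n : rs n <= 2.
Proof. induction n.
 - unfold rs. simpl. rewrite Rplus_0_l, sqrt_1. lra.
 - eapply Rle_trans; [|exact IHn]. unfold rs.
   set (x := INR n). assert (Hx: 0 <= x) by apply pos_INR.
   rewrite S_INR. fold x.
   change (fact (S n)) with (S n * fact n)%nat. rewrite mult_INR, S_INR. fold x.
   change (prodR (fun i => /2 + INR i) (S (S n))) with (prodR (fun i => /2 + INR i) (S n) * (/2 + INR (S n))).
   rewrite S_INR. fold x.
   set (P := prodR (fun i => /2 + INR i) (S n)). assert (0 < P) by apply half_prod_pos.
   set (F := INR (fact n)). assert (0 < F) by (apply lt_0_INR; apply lt_O_fact).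
   assert ((x + 1) * sqrt (x+1+1) <= sqrt (x+1) * (x + 3/2)).
   { rewrite (Rmult_comm (sqrt (x+1))), !sqrt_mul_sq by lra. apply sqrt_le_1_alt. nra. }
   apply Rmult_le_reg_r with (P * (/2 + (x+1))). nra.
   replace (F * sqrt (x + 1) / P * (P * (/ 2 + (x + 1)))) with (F * (sqrt (x+1) * (x + 3/2))) by (field; lra).
   replace ((x + 1) * F * sqrt (x + 1 + 1) / (P * (/ 2 + (x + 1))) * (P * (/ 2 + (x + 1)))) with (F * ((x+1) * sqrt (x+1+1))) by (field; lra).
   apply Rmult_le_compat_l; lra. Qed.

Lemma gs_half_bound n : gs (/2) (S n) <= 2.
Proof. rewrite gs_half_eq by lia. eapply Rle_trans; [|apply (rs_bound (S n))]. unfold rs.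
 unfold Rdiv. apply Rmult_le_compat_r. left. apply Rinv_0_lt_compat, half_prod_pos.
 apply Rmult_le_compat_l. apply pos_INR. apply sqrt_le_1_alt. lra. Qed.

Lemma gs_half_conv : exists g, 0 < g /\ is_lim_seq (gs (/2)) g.
Proof.
 destruct (ex_finite_lim_seq_incr (fun n => gs (/2) (S n)) 2 gs_half_incr gs_half_bound) as [g Hg].
 exists g. split.
 - assert (Hle : forall n, gs (/2) 1 <= gs (/2) (S n)).
   { induction n. lra. eapply Rle_trans. exact IHn. apply gs_half_incr. }
   assert (H := is_lim_seq_le (fun _ => gs (/2) 1) (fun n => gs (/2) (S n)) (gs (/2) 1) g Hle (is_lim_seq_const _) Hg).
   simpl in H. eapply Rlt_le_trans; [|exact H].
   rewrite gs_half_eq by lia. simpl. rewrite sqrt_1. lra.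
 - apply is_lim_seq_incr_1. exact Hg. Qed.
Lemma gs_halfm : exists g, 0 < g /\ forall m, is_lim_seq (gs (/2 + INR m)) (g * prodR (fun i => /2 + INR i) m).
Proof. destruct gs_half_conv as [g [Hg Hl]]. exists g. split. exact Hg.
 induction m.
 - simpl. rewrite Rplus_0_r, Rmult_1_r. exact Hl.
 - replace (/2 + INR (S m)) with ((/2 + INR m) + 1) by (rewrite S_INR; ring).
   replace (g * prodR (fun i => /2 + INR i) (S m)) with ((/2 + INR m) * (g * prodR (fun i => /2 + INR i) m)) by (simpl; ring).
   apply gs_shift. assert (0 <= INR m) by apply pos_INR. lra. exact IHm. Qed.

Lemma Gamma_half_ratio i k :
  Gamma (INR (S i) - /2 + INR k) / Gamma (INR (S i) - /2) = prodR (fun m => /2 + INR i + INR m) k.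
Proof. destruct gs_halfm as [g [Hg Hl]].
 replace (INR (S i) - /2 + INR k) with (/2 + INR (i + k)) by (rewrite S_INR, plus_INR; field).
 replace (INR (S i) - /2) with (/2 + INR i) by (rewrite S_INR; field).
 rewrite !(Gamma_lim _ _ (Hl _)). rewrite prodR_plus.
 assert (0 < prodR (fun i => /2 + INR i) i) by apply half_prod_pos.
 replace (prodR (fun m => /2 + INR (i + m)) k) with (prodR (fun m => /2 + INR i + INR m) k).
 field. lra. apply prodR_ext. intros. rewrite plus_INR. ring. Qed.

Definition PU (k a : nat) : R := prodR (fun m => INR a + 1 + INR m) k.
Definition FU (k N : nat) : R := prodR (fun i => PU k (N + i)) k.

Lemma PU_pos k a : 0 < PU k a.
Proof. apply prodR_pos. intros. assert (0 <= INR a) by apply pos_INR. assert (0 <= INR i) by apply pos_INR. lra. Qed.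

Lemma fact_PU k a : INR (fact (a + k)) = INR (fact a) * PU k a.
Proof. apply INR_fact_shift. Qed.

Lemma GU_factor k i :
  (let j := INR (S i) in Gamma j * Gamma (j + 2 * INR k) / (Gamma (j + INR k)) ^ 2) = PU k (i + k) / PU k i.
Proof. cbv zeta.
 replace (INR (S i) + 2 * INR k) with (INR (S (i + k + k))) by (rewrite !S_INR, !plus_INR; ring).
 replace (INR (S i) + INR k) with (INR (S (i + k))) by (rewrite !S_INR, !plus_INR; ring).
 rewrite !Gamma_nat. rewrite (fact_PU k (i + k)), (fact_PU k i).
 assert (0 < INR (fact i)) by (apply lt_0_INR, lt_O_fact).
 assert (0 < PU k i) by apply PU_pos. assert (0 < PU k (i+k)) by apply PU_pos.
 field. lra. Qed.

Lemma QU_eq k N : prodR (fun i => PU k (i + k) / PU k i) N * FU k 0 = FU k N.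
Proof. induction N.
 - simpl. ring.
 - simpl prodR at 1.
   assert (T := prodR_tele (fun i => PU k (N + i)) k). simpl in T.
   rewrite Nat.add_0_r in T.
   unfold FU in *.
   replace (prodR (fun i => PU k (S N + i)) k) with (prodR (fun i => PU k (N + S i)) k)
     by (apply prodR_ext; intros; f_equal; lia).
   assert (0 < PU k N) by apply PU_pos.
   apply (Rmult_eq_reg_r (PU k N)). 2: lra. rewrite T, <- IHN. rewrite (Nat.add_comm N k). field. lra. Qed.

Lemma GU_lim k : is_lim_seq (fun N => Rpower (INR N) (- (INR k ^ 2)) *
    prodR (fun i => let j := INR (S i) in
             Gamma j * Gamma (j + 2 * INR k) / (Gamma (j + INR k)) ^ 2) N) (/ FU k 0).
Proof.
 assert (HF : 0 < FU k 0) by (apply prodR_pos; intros; apply PU_pos).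
 apply is_lim_seq_ext_loc with (fun N => / FU k 0 *
    prodR (fun i => prodR (fun m => (1 * INR N + (INR i + 1 + INR m)) / INR N) k) k).
 - exists 1%nat. intros N HN. assert (0 < INR N) by (apply lt_0_INR; lia).
   rewrite (prodR_ext _ (fun i => PU k (i + k) / PU k i) N) by (intros; apply GU_factor).
   replace (prodR (fun i => PU k (i + k) / PU k i) N) with (FU k N / FU k 0)
     by (rewrite <- QU_eq; field; lra).
   replace (INR k ^ 2) with (INR (k * k)) by (rewrite mult_INR; ring).
   rewrite Rpower_Ropp, Rpower_pow by lra.
   rewrite (prodR_ext _ (fun i => prodR (fun m => INR (N + i) + 1 + INR m) k / prodR (fun _ => INR N) k)).
   2:{ intros. rewrite <- prodR_div. apply prodR_ext. intros. rewrite plus_INR. field. lra. }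
   rewrite prodR_div, !prodR_const. unfold FU, PU in *. rewrite <- pow_mult.
   assert (0 < INR N ^ (k * k)) by (apply pow_lt; lra). field. lra.
 - assert (L : is_lim_seq (fun N => prodR (fun i => prodR (fun m => (1 * INR N + (INR i + 1 + INR m)) / INR N) k) k)
      (prodR (fun _ => prodR (fun _ => 1) k) k)).
   { apply prodR_lim. intros. apply prodR_lim. intros. apply lim_ratio. }
   rewrite !prodR_const, !pow1 in L.
   assert (H := is_lim_seq_mult' _ _ _ _ (is_lim_seq_const (/FU k 0)) L). rewrite Rmult_1_r in H. exact H. Qed.

Lemma GU_val k : G_U (INR k) = / FU k 0.
Proof. assert (H := is_lim_seq_unique _ _ (GU_lim k)). unfold G_U. cbv zeta in H. rewrite H. reflexivity. Qed.
Fixpoint tri (k : nat) : nat := match k with O => O | S k' => (tri k' + k')%nat end.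

Lemma tri_INR k : INR (tri k) = INR k * (INR k - 1) / 2.
Proof. induction k. simpl. field. simpl tri. rewrite plus_INR, IHk, S_INR. field. Qed.

Lemma pow_tri x k : x ^ tri k = prodR (fun m => x ^ m) k.
Proof. induction k. reflexivity. simpl tri. rewrite pow_add, IHk. reflexivity. Qed.

Definition hNum (m N : nat) := prodR (fun i => /2 + INR i + INR m) N.
Definition hDen (m N : nat) := prodR (fun i => INR N + INR i + INR m) N.
Definition Pm (m N : nat) := prodR (fun r => 2 * INR N + INR m + INR r) m.

Lemma g_shift y m : prodR (fun r => y + 1 + INR r) m * y = prodR (fun r => y + INR r) m * (y + INR m).
Proof. assert (T := prodR_tele (fun r => y + INR r) m). cbv beta in T. change (INR 0) with 0 in T. rewrite Rplus_0_r in T.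
 rewrite <- T. f_equal. apply prodR_ext. intros. rewrite S_INR. ring. Qed.

Lemma hDen_step m N : hDen m (S N) * (INR N + INR m) = hDen m N * (2 * INR N + INR m) * (2 * INR N + INR m + 1).
Proof. assert (T := prodR_tele (fun i => INR N + INR i + INR m) (S N)). cbv beta in T. unfold hDen.
 replace (prodR (fun i => INR (S N) + INR i + INR m) (S N)) with (prodR (fun i => INR N + INR (S i) + INR m) (S N))
   by (apply prodR_ext; intros; rewrite !S_INR; ring).
 replace (INR N + INR m) with (INR N + INR 0 + INR m) by (simpl; ring). rewrite T.
 replace (prodR (fun i => INR N + INR i + INR m) (S N)) with (prodR (fun i => INR N + INR i + INR m) N * (INR N + INR N + INR m)) by reflexivity.
 rewrite S_INR. ring. Qed.

Lemma Pm_step m N : Pm m (S N) * (2 * INR N + INR m) * (2 * INR N + INR m + 1)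
   = Pm m N * (2 * INR N + 2 * INR m) * (2 * INR N + 2 * INR m + 1).
Proof. unfold Pm. set (y := 2 * INR N + INR m).
 replace (prodR (fun r => 2 * INR (S N) + INR m + INR r) m) with (prodR (fun r => (y + 1) + 1 + INR r) m)
   by (apply prodR_ext; intros; rewrite S_INR; unfold y; ring).
 replace (prodR (fun r => 2 * INR N + INR m + INR r) m) with (prodR (fun r => y + INR r) m) by reflexivity.
 assert (A := g_shift (y + 1) m). assert (B := g_shift y m).
 replace (2 * INR N + 2 * INR m) with (y + INR m) by (unfold y; ring).
 replace (2 * INR N + 2 * INR m + 1) with (y + 1 + INR m) by (unfold y; ring).
 transitivity ((prodR (fun r => y + 1 + 1 + INR r) m * (y + 1)) * y). ring. rewrite A.
 transitivity ((prodR (fun r => y + 1 + INR r) m * y) * (y + 1 + INR m)). ring. rewrite B. ring. Qed.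

Lemma am_eq m N : (1 <= N)%nat ->
  4 ^ N * (hNum m N / hDen m N) = 2 * INR (fact m) / INR (fact (2 * m)) * Pm m N.
Proof. intros HN. induction HN.
 - unfold hNum, hDen, Pm. simpl prodR. simpl INR at 1 2 3 4.
   assert (F := INR_fact_shift (S m) m). replace (S m + m)%nat with (S (2 * m)) in F by lia.
   change (fact (S (2 * m))) with (S (2 * m) * fact (2 * m))%nat in F.
   change (fact (S m)) with (S m * fact m)%nat in F.
   rewrite !mult_INR, !S_INR, mult_INR in F. simpl (INR 2) in F.
   replace (prodR (fun r => 2 * 1 + INR m + INR r) m) with (prodR (fun m0 => INR m + 1 + 1 + INR m0) m)
     by (apply prodR_ext; intros; ring).
   replace (m + (m + 0))%nat with (2 * m)%nat by lia.
   set (P := prodR (fun m0 => INR m + 1 + 1 + INR m0) m) in *.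
   assert (0 < INR (fact m)) by (apply lt_0_INR, lt_O_fact).
   assert (0 < INR (fact (2 * m))) by (apply lt_0_INR, lt_O_fact).
   assert (0 <= INR m) by apply pos_INR.
   replace P with (((1+1)*INR m+1) * INR (fact (2*m)) / ((INR m + 1) * INR (fact m))) by (rewrite F; field; lra).
   field. lra.
 - set (c := 2 * INR (fact m) / INR (fact (2 * m))) in *.
   assert (HD := hDen_step m m0). assert (HP := Pm_step m m0).
   assert (0 < INR m0) by (apply lt_0_INR; lia). assert (0 <= INR m) by apply pos_INR.
   assert (0 < hDen m m0) by (apply prodR_pos; intros; assert (0 <= INR i) by apply pos_INR; lra).
   assert (0 < hDen m (S m0)) by (apply prodR_pos; intros; assert (0 <= INR i) by apply pos_INR; rewrite S_INR; lra).
   replace (hNum m (S m0)) with (hNum m m0 * (/2 + INR m0 + INR m)) by reflexivity.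
   assert (HD' : hDen m (S m0) = hDen m m0 * (2 * INR m0 + INR m) * (2 * INR m0 + INR m + 1) / (INR m0 + INR m))
     by (apply (Rmult_eq_reg_r (INR m0 + INR m)); [rewrite HD; field|]; lra).
   assert (HP' : Pm m (S m0) = Pm m m0 * (2 * INR m0 + 2 * INR m) * (2 * INR m0 + 2 * INR m + 1) / ((2 * INR m0 + INR m) * (2 * INR m0 + INR m + 1)))
     by (apply (Rmult_eq_reg_r ((2 * INR m0 + INR m) * (2 * INR m0 + INR m + 1))); [rewrite <- Rmult_assoc, HP; field; split|]; nra).
   rewrite HD', HP'.
   replace (c * (Pm m m0 * (2 * INR m0 + 2 * INR m) * (2 * INR m0 + 2 * INR m + 1) /
      ((2 * INR m0 + INR m) * (2 * INR m0 + INR m + 1))))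
     with (c * Pm m m0 * ((2 * INR m0 + 2 * INR m) * (2 * INR m0 + 2 * INR m + 1) /
      ((2 * INR m0 + INR m) * (2 * INR m0 + INR m + 1)))) by (field; split; lra).
   rewrite <- IHHN. simpl pow. field. repeat split; lra. Qed.
Lemma Gamma_half_pos i : 0 < Gamma (INR (S i) - /2).
Proof. destruct gs_halfm as [g [Hg Hl]].
 replace (INR (S i) - /2) with (/2 + INR i) by (rewrite S_INR; field).
 rewrite (Gamma_lim _ _ (Hl _)). apply Rmult_lt_0_compat. exact Hg. apply half_prod_pos. Qed.

Lemma GO_factor k N i : (1 <= N)%nat ->
  (let j := INR (S i) in Gamma (INR N + j - 1) * Gamma (j - / 2 + INR k) /
             (Gamma (INR N + j - 1 + INR k) * Gamma (j - / 2)))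
  = prodR (fun m => (/2 + INR i + INR m) / (INR N + INR i + INR m)) k.
Proof. intros HN. cbv zeta.
 assert (Ea : INR N + INR (S i) - 1 = INR (S (N - 1 + i))).
 { rewrite !S_INR, plus_INR, minus_INR by lia. simpl. ring. }
 assert (Eb : INR N + INR (S i) - 1 + INR k = INR (S (N - 1 + i + k))).
 { rewrite !S_INR, !plus_INR, minus_INR by lia. simpl. ring. }
 rewrite Eb, Ea, !Gamma_nat, (fact_PU k (N - 1 + i)).
 assert (HG := Gamma_half_ratio i k). assert (HP := Gamma_half_pos i).
 assert (0 < INR (fact (N - 1 + i))) by (apply lt_0_INR, lt_O_fact).
 assert (0 < PU k (N - 1 + i)) by apply PU_pos.
 rewrite prodR_div, <- HG.
 replace (PU k (N - 1 + i)) with (prodR (fun m => INR N + INR i + INR m) k).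
 2:{ apply prodR_ext. intros. rewrite plus_INR, minus_INR by lia. simpl. ring. }
 assert (0 < prodR (fun m => INR N + INR i + INR m) k).
 { apply prodR_pos. intros. assert (0 <= INR i0) by apply pos_INR. assert (0 <= INR i) by apply pos_INR.
   assert (0 < INR N) by (apply lt_0_INR; lia). lra. }
 field. repeat split; lra. Qed.

Definition cO (m : nat) : R := 2 * INR (fact m) / INR (fact (2 * m)).

Lemma GO_lim k : is_lim_seq (fun N => Rpower (INR N) (- (INR k * (INR k - 1) / 2)) *
    Rpower 2 (2 * INR N * INR k) *
    prodR (fun i => let j := INR (S i) in
             Gamma (INR N + j - 1) * Gamma (j - / 2 + INR k) /
             (Gamma (INR N + j - 1 + INR k) * Gamma (j - / 2))) N)
   (prodR (fun m => cO m * 2 ^ m) k).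
Proof.
 apply is_lim_seq_ext_loc with (fun N => prodR (fun m => cO m * prodR (fun r => (2 * INR N + (INR m + INR r)) / INR N) m) k).
 - exists 1%nat. intros N HN. assert (HN0 : 0 < INR N) by (apply lt_0_INR; lia).
   rewrite (prodR_ext _ (fun i => prodR (fun m => (/2 + INR i + INR m) / (INR N + INR i + INR m)) k) N)
     by (intros; apply GO_factor; lia).
   rewrite prodR_swap.
   rewrite <- tri_INR, Rpower_Ropp, Rpower_pow by lra.
   replace (2 * INR N * INR k) with (INR (2 * N * k)) by (rewrite !mult_INR; reflexivity).
   rewrite Rpower_pow by lra. rewrite pow_mult, pow_mult, pow_tri.
   rewrite <- (prodR_const ((2 ^ 2) ^ N) k), <- prodR_inv, <- !prodR_mult.
   apply prodR_ext. intros m Hm.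
   rewrite prodR_div. change (prodR (fun i => /2 + INR i + INR m) N) with (hNum m N).
   change (prodR (fun i => INR N + INR i + INR m) N) with (hDen m N).
   replace (2 ^ 2) with 4 by ring.
   assert (A := am_eq m N HN). unfold cO.
   rewrite prodR_div, prodR_const.
   replace (prodR (fun r => 2 * INR N + (INR m + INR r)) m) with (Pm m N) by (apply prodR_ext; intros; ring).
   unfold hNum, hDen in A.
   transitivity (/ INR N ^ m * (4 ^ N * (prodR (fun i => /2 + INR i + INR m) N / prodR (fun i => INR N + INR i + INR m) N))). 2: ring.
   rewrite A. assert (0 < INR N ^ m) by (apply pow_lt; lra). assert (0 < INR (fact (2*m))) by (apply lt_0_INR, lt_O_fact). field. lra.
 - apply prodR_lim. intros m Hm. apply is_lim_seq_mult'. apply is_lim_seq_const.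
   rewrite <- prodR_const. apply prodR_lim. intros. apply lim_ratio. Qed.

Lemma GO_val k : G_O (INR k) = / 2 * prodR (fun m => cO m * 2 ^ m) k.
Proof. assert (H := is_lim_seq_unique _ _ (GO_lim k)). unfold G_O. cbv zeta in H. rewrite H. reflexivity. Qed.
Fixpoint sumN (f : nat -> nat) (n : nat) : nat := match n with O => O | S m => (sumN f m + f m)%nat end.
Fixpoint prodN (f : nat -> nat) (n : nat) : nat := match n with O => 1%nat | S m => (prodN f m * f m)%nat end.

Module MC.
From mathcomp Require Import ssreflect ssrfun ssrbool eqtype ssrnat div prime bigop binomial.
Local Open Scope nat_scope.

Lemma fact_eq n : Factorial.fact n = n`!.
Proof. elim: n => [|n IH] //=. rewrite factS IH. by []. Qed.

Lemma expn_pow m n : expn m n = Nat.pow m n.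
Proof. elim: n => [|n IH] //=. rewrite expnS IH. by []. Qed.

Lemma divn_div (m d : nat) : 0 < d -> divn m d = Nat.div m d.
Proof. move=> Hd. apply: (Nat.div_unique m d (m %/ d) (m %% d)).
 - apply/ltP. by rewrite ltn_mod.
 - rewrite {1}(divn_eq m d) mulnC. by []. Qed.

Lemma prime_of_Z p : Znumtheory.prime (Z.of_nat p) -> prime p.
Proof. move=> Hp. apply/primeP. split.
 - have H1 := Znumtheory.prime_ge_2 _ Hp. apply/ltP. lia.
 - move=> d /dvdnP [c Hc].
   have Hd : (Z.of_nat d | Z.of_nat p)%Z.
   { exists (Z.of_nat c). rewrite Hc. rewrite Nat2Z.inj_mul. by []. }
   have := Znumtheory.prime_divisors _ Hp _ Hd. move=> [H|[H|[H|H]]].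
   + exfalso. lia.
   + apply/orP; left. apply/eqP. lia.
   + apply/orP; right. apply/eqP. lia.
   + have H1 := Znumtheory.prime_ge_2 _ Hp. exfalso. lia. Qed.

Lemma sumN_big f n : sumN f n = \sum_(0 <= i < n) f i.
Proof. elim: n => [|n IH]. by rewrite big_geq. rewrite big_nat_recr //= IH. by []. Qed.

Lemma legendre p n L : prime p -> n <= L ->
  logn p (Factorial.fact n) = sumN (fun l => Nat.div n (Nat.pow p (S l))) L.
Proof. move=> pp nL. rewrite fact_eq logn_fact // sumN_big.
 rewrite (big_cat_nat (leq0n n) nL) /=.
 rewrite [X in _ = _ + X]big1_seq; last first.
 { move=> l /andP[_]; rewrite mem_index_iota => /andP[nl _].
   change (Nat.div n (Nat.pow p (S l)) = 0).
   rewrite -(expn_pow p l.+1) -divn_div; last by rewrite expn_gt0 prime_gt0.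
   apply: divn_small. apply: leq_trans (ltn_expl n (prime_gt1 pp)) _.
   apply: leq_pexp2l. by apply: prime_gt0. by apply: leq_trans nl _. }
 rewrite addn0 big_add1 /=. apply: eq_bigr => l _.
 change (n %/ p ^ l.+1 = Nat.div n (Nat.pow p (S l))).
 rewrite -(expn_pow p l.+1) divn_div //. by rewrite expn_gt0 prime_gt0. Qed.

Lemma prodN_gt0 f n : (forall i, 0 < f i) -> 0 < prodN f n.
Proof. move=> H. elim: n => [|n IH] //=. rewrite muln_gt0 IH. by apply: H. Qed.

Lemma logn_prodN p f n : (forall i, 0 < f i) -> logn p (prodN f n) = sumN (fun i => logn p (f i)) n.
Proof. move=> H. elim: n => [|n IH] /=. by rewrite logn1. rewrite lognM ?IH //. by apply: prodN_gt0. Qed.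

Lemma logn_mul p a b : 0 < a -> 0 < b -> logn p (Nat.mul a b) = logn p a + logn p b.
Proof. move=> Ha Hb. apply: lognM Ha Hb. Qed.

Lemma logn_two p m : prime p -> p <> 2 -> logn p (Nat.pow 2 m) = 0.
Proof. move=> pp p2. rewrite -expn_pow lognX logn_prime //.
 have -> : (p == 2) = false by apply/eqP. by rewrite muln0. Qed.

Lemma factor p A : prime p -> 0 < A ->
  exists a, A = Nat.mul a (Nat.pow p (logn p A)) /\ 0 < a /\ ~ (exists c, a = Nat.mul c p).
Proof. move=> pp HA. have [a Ha HA'] := pfactor_coprime pp HA. exists a. split.
 rewrite -expn_pow. exact HA'.
 split. rewrite lt0n. apply/negP => /eqP a0. move: HA. by rewrite HA' a0.
 move=> [c Hc]. move: Ha. rewrite prime_coprime // => /negP; apply. apply/dvdnP. exists c. exact Hc. Qed.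

Definition vlog (p n : nat) : nat := logn p n.

Lemma vlog_fact p n L : Znumtheory.prime (Z.of_nat p) -> le n L ->
  vlog p (Factorial.fact n) = sumN (fun l => Nat.div n (Nat.pow p (S l))) L.
Proof. move=> pp /leP nL. apply: legendre => //. by apply: prime_of_Z. Qed.

Lemma vlog_mul p a b : lt 0 a -> lt 0 b -> vlog p (Nat.mul a b) = Nat.add (vlog p a) (vlog p b).
Proof. move=> /ltP Ha /ltP Hb. by apply: logn_mul. Qed.

Lemma vlog_prodN p f n : (forall i, lt 0 (f i)) -> vlog p (prodN f n) = sumN (fun i => vlog p (f i)) n.
Proof. move=> H. apply: logn_prodN => i. apply/ltP. by apply: H. Qed.

Lemma vlog_two p m : Znumtheory.prime (Z.of_nat p) -> p <> 2 -> vlog p (Nat.pow 2 m) = 0.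
Proof. move=> pp p2. apply: logn_two => //. by apply: prime_of_Z. Qed.

Lemma vfactor p A : Znumtheory.prime (Z.of_nat p) -> lt 0 A ->
  exists a, A = Nat.mul a (Nat.pow p (vlog p A)) /\ lt 0 a /\ ~ (exists c, a = Nat.mul c p).
Proof. move=> pp /ltP HA. have [a [H1 [H2 H3]]] := factor p A (prime_of_Z _ pp) HA. exists a. split => //. split => //. by apply/ltP. Qed.
End MC.
Lemma sumN_ext f g n : (forall i, (i < n)%nat -> f i = g i) -> sumN f n = sumN g n.
Proof. induction n; intros H; simpl. reflexivity. rewrite IHn, H; [reflexivity|lia|intros; apply H; lia]. Qed.

Lemma sumN_add f g n : sumN (fun i => f i + g i)%nat n = (sumN f n + sumN g n)%nat.
Proof. induction n; simpl. reflexivity. rewrite IHn. lia. Qed.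

Lemma sumN_split f a b : sumN f (a + b) = (sumN f a + sumN (fun i => f (a + i)%nat) b)%nat.
Proof. induction b; simpl. rewrite Nat.add_0_r. lia. rewrite Nat.add_succ_r. simpl. rewrite IHb. lia. Qed.

Lemma sumN_swap (f : nat -> nat -> nat) n L :
  sumN (fun i => sumN (fun l => f i l) L) n = sumN (fun l => sumN (fun i => f i l) n) L.
Proof. induction n; simpl. induction L; simpl; lia. rewrite IHn, <- sumN_add. reflexivity. Qed.

Lemma sumN_zero f n : (forall i, (i < n)%nat -> f i = 0%nat) -> sumN f n = 0%nat.
Proof. intros H. induction n; simpl. reflexivity. rewrite IHn, H; [reflexivity|lia|intros; apply H; lia]. Qed.

Definition SS (q n : nat) : nat := sumN (fun i => i / q)%nat n.

Lemma div_eq q u r : (0 < q)%nat -> (r < q)%nat -> ((u * q + r) / q)%nat = u.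
Proof. intros. rewrite Nat.div_add_l by lia. rewrite Nat.div_small by lia. lia. Qed.

Lemma S_formula q a r : (0 < q)%nat -> (r <= q)%nat ->
  (2 * SS q (a * q + r) + q * a = q * a * a + 2 * a * r)%nat.
Proof. intros Hq. revert r. induction a; intros r Hr.
 - simpl. unfold SS. rewrite sumN_zero. lia. intros. rewrite Nat.div_small; lia.
 - assert (IH := IHa q (le_n q)).
   replace (S a * q)%nat with (a * q + q)%nat in * by lia.
   induction r.
   + rewrite Nat.add_0_r. nia.
   + replace (a * q + q + S r)%nat with (S (a * q + q + r)) by lia.
     assert (E : SS q (S (a * q + q + r)) = (SS q (a * q + q + r) + S a)%nat).
     { unfold SS. simpl sumN. f_equal. replace (a * q + q + r)%nat with ((S a) * q + r)%nat by lia. apply div_eq; lia. }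
     rewrite E. specialize (IHr ltac:(lia)). nia. Qed.

Definition AU k := (fact (k * k) * prodN fact k)%nat.
Definition BU k := prodN (fun i => fact (i + k)) k.
Definition AO k := (fact (tri k) * prodN (fun m => 2 * fact m * 2 ^ m) k)%nat.
Definition BO k := (2 * prodN (fun m => fact (2 * m)) k)%nat.
Definition SS2 (q n : nat) : nat := sumN (fun i => (2 * i) / q)%nat n.

Lemma fact_pos' n : (0 < fact n)%nat.
Proof. apply lt_O_fact. Qed.

Lemma prodN_pos f n : (forall i, 0 < f i)%nat -> (0 < prodN f n)%nat.
Proof. intros H. induction n; simpl. lia. specialize (H n). nia. Qed.

Lemma vU1 p k : prime (Z.of_nat p) ->
  MC.vlog p (AU k) = sumN (fun l => k * k / p ^ S l + SS (p ^ S l) k)%nat (k * k + 2 * k).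
Proof. intros pp. unfold AU. rewrite MC.vlog_mul by (apply fact_pos' || (apply prodN_pos; intros; apply fact_pos')).
 rewrite (MC.vlog_fact p (k * k) (k * k + 2 * k)) by (auto; lia).
 rewrite MC.vlog_prodN by (intros; apply fact_pos').
 rewrite (sumN_ext _ (fun i => sumN (fun l => i / p ^ S l)%nat (k * k + 2 * k)) k) by (intros; apply MC.vlog_fact; auto; nia).
 rewrite sumN_swap, <- sumN_add. reflexivity. Qed.

Lemma vU2 p k : prime (Z.of_nat p) ->
  (MC.vlog p (BU k) + sumN (fun l => SS (p ^ S l) k) (k * k + 2 * k) =
   sumN (fun l => SS (p ^ S l) (2 * k)) (k * k + 2 * k))%nat.
Proof. intros pp. unfold BU. rewrite MC.vlog_prodN by (intros; apply fact_pos').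
 rewrite (sumN_ext _ (fun i => sumN (fun l => (i + k) / p ^ S l)%nat (k * k + 2 * k)) k) by (intros; apply MC.vlog_fact; auto; nia).
 rewrite sumN_swap, <- sumN_add. apply sumN_ext. intros l _. unfold SS.
 replace (2 * k)%nat with (k + k)%nat by lia. rewrite sumN_split.
 rewrite Nat.add_comm. f_equal. apply sumN_ext. intros. f_equal. lia. Qed.

Lemma vO1 p k : prime (Z.of_nat p) -> p <> 2%nat ->
  MC.vlog p (AO k) = sumN (fun l => tri k / p ^ S l + SS (p ^ S l) k)%nat (tri k + 2 * k).
Proof. intros pp p2. unfold AO.
 assert (Hpos : forall m, (0 < 2 * fact m * 2 ^ m)%nat).
 { intros. assert (0 < fact m)%nat by apply fact_pos'. assert (0 < 2 ^ m)%nat by (apply Nat.neq_0_lt_0, Nat.pow_nonzero; lia). nia. }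
 rewrite MC.vlog_mul by (apply fact_pos' || (apply prodN_pos; intros; apply Hpos)).
 rewrite (MC.vlog_fact p (tri k) (tri k + 2 * k)) by (auto; lia).
 rewrite MC.vlog_prodN by (intros; apply Hpos).
 rewrite (sumN_ext _ (fun i => sumN (fun l => i / p ^ S l)%nat (tri k + 2 * k)) k).
 - rewrite sumN_swap, <- sumN_add. reflexivity.
 - intros i Hi. assert (0 < fact i)%nat by apply fact_pos'. assert (0 < 2 ^ i)%nat by (apply Nat.neq_0_lt_0, Nat.pow_nonzero; lia).
   rewrite MC.vlog_mul by lia. rewrite MC.vlog_mul by lia.
   rewrite (MC.vlog_two p i pp p2). change 2%nat with (2 ^ 1)%nat at 1. rewrite (MC.vlog_two p 1 pp p2).
   rewrite (MC.vlog_fact p i (tri k + 2 * k)) by (auto; lia). lia. Qed.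

Lemma vO2 p k : prime (Z.of_nat p) -> p <> 2%nat ->
  MC.vlog p (BO k) = sumN (fun l => SS2 (p ^ S l) k) (tri k + 2 * k).
Proof. intros pp p2. unfold BO.
 rewrite MC.vlog_mul by (lia || (apply prodN_pos; intros; apply fact_pos')).
 change 2%nat with (2 ^ 1)%nat at 1. rewrite (MC.vlog_two p 1 pp p2).
 rewrite MC.vlog_prodN by (intros; apply fact_pos').
 rewrite (sumN_ext _ (fun i => sumN (fun l => (2 * i) / p ^ S l)%nat (tri k + 2 * k)) k) by (intros; apply MC.vlog_fact; auto; lia).
 rewrite sumN_swap. reflexivity. Qed.
Open Scope R_scope.
Fixpoint sumR (f : nat -> R) (n : nat) : R := match n with O => 0 | S m => sumR f m + f m end.

Lemma INR_prodN f n : INR (prodN f n) = prodR (fun i => INR (f i)) n.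
Proof. induction n; simpl prodN; simpl prodR. reflexivity. rewrite mult_INR, IHn. reflexivity. Qed.

Lemma sumR_lin3 f1 f2 f3 n :
  sumR (fun i => INR (f1 i) + 2 * INR (f2 i) - INR (f3 i)) n = INR (sumN f1 n) + 2 * INR (sumN f2 n) - INR (sumN f3 n).
Proof. induction n; simpl sumR; simpl sumN. simpl. ring. rewrite IHn, !plus_INR. ring. Qed.

Lemma series_fin (a : nat -> R) L : (forall n, (L <= n)%nat -> a n = 0) -> is_series a (sumR a L).
Proof. intros H. change (is_lim_seq (sum_n a) (sumR a L)).
 assert (E : forall n, sum_n a n = sumR a (S n)).
 { induction n. rewrite sum_O. simpl. ring. rewrite sum_Sn, IHn. reflexivity. }
 apply is_lim_seq_ext_loc with (fun _ => sumR a L). exists L. intros n Hn. rewrite E.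
 clear E. induction Hn.
 replace (sumR a (S L)) with (sumR a L + a L) by reflexivity. rewrite H by lia. ring.
 replace (sumR a (S (S m))) with (sumR a (S m) + a (S m)) by reflexivity. rewrite IHHn, H by lia. ring.
 apply is_lim_seq_const. Qed.

Lemma fl_nat a q : (0 < q)%nat -> fl (INR a / INR q) = Z.of_nat (a / q).
Proof. intros Hq. unfold fl, Int_part.
 assert (Hqr : 0 < INR q) by (apply lt_0_INR; lia).
 assert (Ea := Nat.div_mod_eq a q). assert (Hr := Nat.mod_upper_bound a q ltac:(lia)).
 set (d := (a / q)%nat) in *. set (r := (a mod q)%nat) in *.
 assert (HA : INR a = INR q * INR d + INR r) by (rewrite Ea at 1; rewrite plus_INR, mult_INR; reflexivity).
 assert (Hr' : INR r + 1 <= INR q) by (rewrite <- S_INR; apply le_INR; lia).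
 assert (0 <= INR r) by apply pos_INR.
 assert (E : up (INR a / INR q) = (Z.of_nat d + 1)%Z).
 { assert (Hx : INR a / INR q = INR d + INR r / INR q) by (rewrite HA; field; lra).
   assert (H1 : INR r / INR q < 1) by (apply Rmult_lt_reg_r with (INR q); [lra|]; unfold Rdiv; rewrite Rmult_assoc, Rinv_l; lra).
   assert (H2 : 0 <= INR r / INR q) by (apply Rmult_le_pos; [lra| left; apply Rinv_0_lt_compat; lra]).
   symmetry. apply tech_up; rewrite plus_IZR, <- INR_IZR_INZ, Hx; simpl; lra. }
 rewrite E. lia. Qed.

Lemma fl_zero : fl 0 = 0%Z.
Proof. replace 0 with (INR 0 / INR 1) by (simpl; field). rewrite fl_nat by lia. reflexivity. Qed.

Lemma fl_neg1 q : 1 < q -> fl (-1 / q) = (-1)%Z.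
Proof. intros Hq. unfold fl, Int_part.
 assert (E : up (-1 / q) = 0%Z).
 { symmetry. apply tech_up.
   - apply (Rmult_lt_reg_r q). lra. unfold Rdiv. rewrite Rmult_assoc, Rinv_l by lra. lra.
   - apply (Rmult_le_reg_r q). lra. unfold Rdiv. rewrite Rmult_plus_distr_r, Rmult_assoc, Rinv_l by lra. lra. }
 rewrite E. reflexivity. Qed.

Lemma SS_decomp q n : (0 < q)%nat -> (1 <= n)%nat -> exists c r, n = (c * q + r)%nat /\ (r <= q)%nat /\ c = ((n - 1) / q)%nat.
Proof. intros Hq Hn. exists ((n - 1) / q)%nat, (S ((n - 1) mod q)).
 assert (Ea := Nat.div_mod_eq (n - 1) q). assert (Hr := Nat.mod_upper_bound (n - 1) q ltac:(lia)).
 split. lia. split. lia. reflexivity. Qed.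

Lemma termU_eq p k l : (1 <= k)%nat -> (0 < p)%nat ->
  termU p k l = INR (k * k / p ^ l) + 2 * INR (SS (p ^ l) k) - INR (SS (p ^ l) (2 * k)).
Proof. intros Hk Hp. unfold termU. cbv zeta. rewrite <- (pow_INR p l).
 set (q := (p ^ l)%nat). assert (Hq : (0 < q)%nat) by (apply Nat.neq_0_lt_0, Nat.pow_nonzero; lia).
 replace (INR k ^ 2) with (INR (k * k)) by (rewrite mult_INR; ring).
 replace (INR k - 1) with (INR (k - 1)) by (rewrite minus_INR by lia; reflexivity).
 replace (2 * INR k - 1) with (INR (2 * k - 1)) by (rewrite minus_INR, mult_INR by lia; reflexivity).
 rewrite !fl_nat by lia. rewrite <- !INR_IZR_INZ.
 destruct (SS_decomp q k Hq Hk) as [a [r [Ha [Hr Hc]]]].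
 destruct (SS_decomp q (2 * k) Hq ltac:(lia)) as [b [r' [Hb [Hr' Hc']]]].
 rewrite <- Hc, <- Hc'.
 assert (F1 := S_formula q a r Hq Hr). rewrite <- Ha in F1.
 assert (F2 := S_formula q b r' Hq Hr'). rewrite <- Hb in F2.
 apply (f_equal INR) in F1. apply (f_equal INR) in F2. rewrite !plus_INR, !mult_INR in F1, F2.
 apply (f_equal INR) in Ha. apply (f_equal INR) in Hb. rewrite !plus_INR, !mult_INR in Ha, Hb.
 simpl (INR 2) in *.
 rewrite ?mult_INR in Hb. assert (Er : INR r = INR k - INR a * INR q) by lra. assert (Er' : INR r' = 2 * INR k - INR b * INR q) by lra.
 rewrite Er in F1. rewrite Er' in F2.
 assert (S1e : INR (SS q k) = (INR q * INR a * INR a + 2 * INR a * (INR k - INR a * INR q) - INR q * INR a) / 2) by lra.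
 assert (S2e : INR (SS q (2 * k)) = (INR q * INR b * INR b + 2 * INR b * (2 * INR k - INR b * INR q) - INR q * INR b) / 2) by lra.
 rewrite S1e, S2e. field. Qed.
Lemma half_split q t i : q = (2 * t + 1)%nat -> ((2 * i) / q = i / q + (i + t) / q)%nat.
Proof. intros Hq. assert (Hq0 : (0 < q)%nat) by lia.
 assert (Ea := Nat.div_mod_eq i q). assert (Hr := Nat.mod_upper_bound i q ltac:(lia)).
 set (u := (i / q)%nat) in *. set (r := (i mod q)%nat) in *.
 destruct (Nat.le_gt_cases r t) as [H|H].
 - replace (2 * i)%nat with ((2 * u) * q + 2 * r)%nat by lia. rewrite div_eq by lia.
   replace (i + t)%nat with (u * q + (r + t))%nat by lia. rewrite div_eq by lia. lia.
 - replace (2 * i)%nat with ((2 * u + 1) * q + (2 * r - q))%nat by lia. rewrite div_eq by lia.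
   replace (i + t)%nat with ((u + 1) * q + (r + t - q))%nat by lia. rewrite div_eq by lia. lia. Qed.

Lemma SS2_eq q t k : q = (2 * t + 1)%nat -> SS2 q k = (SS q k + SS q (k + t))%nat.
Proof. intros Hq. unfold SS2, SS.
 rewrite (sumN_ext _ (fun i => i / q + (i + t) / q)%nat k) by (intros; apply half_split; auto).
 rewrite sumN_add. f_equal. rewrite Nat.add_comm, sumN_split.
 rewrite (sumN_zero (fun i => i / q)%nat t) by (intros; apply Nat.div_small; lia).
 simpl. apply sumN_ext. intros. f_equal. lia. Qed.

Lemma termO_eq p k l t : (1 <= k)%nat -> (p ^ l = 2 * t + 1)%nat -> (1 <= t)%nat ->
  termO p k l = INR (tri k / p ^ l) - INR (SS (p ^ l) (k + t)).
Proof. intros Hk Hq Ht. unfold termO. cbv zeta. rewrite <- (pow_INR p l).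
 set (q := (p ^ l)%nat) in *. assert (Hq0 : (0 < q)%nat) by lia.
 replace (/ 2 * INR k * (INR k - 1)) with (INR (tri k)) by (rewrite tri_INR; field).
 rewrite fl_nat by lia.
 assert (Hc : fl2 ((2 * INR k - 3) / INR q) = Z.of_nat ((k - 1 + t) / q)).
 { unfold fl2. destruct (Nat.eq_dec k 1) as [E|E].
   - subst k. replace (2 * INR 1 - 3) with (-1) by (simpl; ring).
     rewrite fl_neg1. 2:{ replace 1 with (INR 1) by reflexivity. apply lt_INR. lia. }
     replace (/ 2 * (IZR (-1) + 1)) with 0 by (simpl; ring). rewrite fl_zero.
     rewrite Nat.div_small by lia. reflexivity.
   - replace (2 * INR k - 3) with (INR (2 * k - 3)) by (rewrite minus_INR, mult_INR by lia; simpl; ring).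
     rewrite fl_nat by lia. rewrite <- INR_IZR_INZ.
     replace (/ 2 * (INR ((2 * k - 3) / q) + 1)) with (INR ((2 * k - 3) / q + 1) / INR 2)
       by (rewrite plus_INR; simpl; field).
     rewrite fl_nat by lia. f_equal.
     replace ((2 * k - 3) / q + 1)%nat with ((2 * k - 3 + 1 * q) / q)%nat by (rewrite Nat.div_add; lia).
     rewrite Nat.div_div by lia.
     replace (2 * k - 3 + 1 * q)%nat with (2 * (k - 1 + t))%nat by lia.
     rewrite (Nat.mul_comm q 2). rewrite Nat.div_mul_cancel_l by lia. reflexivity. }
 rewrite Hc, <- !INR_IZR_INZ.
 destruct (SS_decomp q (k + t) Hq0 ltac:(lia)) as [c [r [Ha [Hr Hc']]]].
 replace (k - 1 + t)%nat with (k + t - 1)%nat by lia. rewrite <- Hc'.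
 assert (F := S_formula q c r Hq0 Hr). rewrite <- Ha in F.
 apply (f_equal INR) in F. apply (f_equal INR) in Ha. rewrite !plus_INR, !mult_INR in F, Ha.
 assert (HqR : INR q = 2 * INR t + 1) by (rewrite Hq, plus_INR, mult_INR; simpl; ring).
 simpl (INR 2) in *.
 repeat rewrite mult_INR in F. simpl (INR 2) in F. assert (Er : INR r = INR k + INR t - INR c * INR q) by lra. rewrite Er in F.
 assert (S1 : INR (SS q (k + t)) = (INR q * INR c * INR c + 2 * INR c * (INR k + INR t - INR c * INR q) - INR q * INR c) / 2) by lra.
 rewrite S1, HqR. field. Qed.

Lemma sumR_ext f g n : (forall i, (i < n)%nat -> f i = g i) -> sumR f n = sumR g n.
Proof. induction n; intros H; simpl. reflexivity. rewrite IHn, H; [reflexivity|lia|intros; apply H; lia]. Qed.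

Lemma pow_big p n : (2 <= p)%nat -> (n < p ^ S n)%nat.
Proof. intros. assert (H1 := Nat.pow_gt_lin_r p (S n) ltac:(lia)). lia. Qed.

Lemma termU_tail p k n : (1 <= k)%nat -> (2 <= p)%nat -> (k * k + 2 * k <= n)%nat -> termU p k (S n) = 0.
Proof. intros Hk Hp Hn. rewrite termU_eq by lia. assert (B := pow_big p n Hp).
 rewrite Nat.div_small by lia. unfold SS. rewrite !sumN_zero. simpl. ring.
 intros; apply Nat.div_small; lia. intros; apply Nat.div_small; lia. Qed.

Lemma termO_tail p k n t : (1 <= k)%nat -> (2 <= p)%nat -> (p ^ S n = 2 * t + 1)%nat -> (1 <= t)%nat ->
  (tri k + 2 * k <= n)%nat -> termO p k (S n) = 0.
Proof. intros Hk Hp Hq Ht Hn. rewrite (termO_eq p k (S n) t) by lia. assert (B := pow_big p n Hp).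
 rewrite Nat.div_small by lia. unfold SS. rewrite sumN_zero. simpl. ring.
 intros; apply Nat.div_small; lia. Qed.

Lemma vp_of p A B : prime (Z.of_nat p) -> (0 < A)%nat -> (0 < B)%nat ->
  vp_is p (INR A / INR B) (Z.of_nat (MC.vlog p A) - Z.of_nat (MC.vlog p B)).
Proof. intros pp HA HB.
 assert (p2 := prime_ge_2 _ pp).
 destruct (MC.vfactor p A pp HA) as [a [Ea [Ha Na]]].
 destruct (MC.vfactor p B pp HB) as [b [Eb [Hb Nb]]].
 assert (ND : forall x, (0 < x)%nat -> ~ (exists c, x = (c * p)%nat) -> ~ (Z.of_nat p | Z.of_nat x)%Z).
 { intros x Hx Nx [z Hz]. apply Nx. exists (Z.to_nat z). assert (0 <= z)%Z by nia. lia. }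
 exists (Z.of_nat a), (Z.of_nat b). split. lia. split. apply ND; auto. split. apply ND; auto.
 rewrite <- !INR_IZR_INZ. unfold Z.sub. rewrite powerRZ_add, powerRZ_neg', <- !pow_powerRZ.
 2:{ apply not_0_INR. lia. }
 rewrite Ea at 1. rewrite Eb at 1. rewrite !mult_INR, !pow_INR.
 assert (0 < INR p) by (apply lt_0_INR; lia).
 assert (0 < INR b) by (apply lt_0_INR; lia).
 assert (0 < INR p ^ MC.vlog p B) by (apply pow_lt; lra).
 field. lra. Qed.
Lemma gU_val k : g_U (INR k) = INR (AU k) / INR (BU k).
Proof. unfold g_U, B_U.
 replace (1 + INR k ^ 2) with (INR (S (k * k))) by (rewrite S_INR, mult_INR; ring).
 rewrite Gamma_nat, GU_val. unfold AU, BU. rewrite !mult_INR, !INR_prodN.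
 assert (E : FU k 0 = prodR (fun i => INR (fact (i + k))) k / prodR (fun i => INR (fact i)) k).
 { rewrite <- prodR_div. apply prodR_ext. intros. rewrite fact_PU. rewrite Nat.add_0_l.
   assert (0 < INR (fact i)) by (apply lt_0_INR, lt_O_fact). field. lra. }
 assert (0 < prodR (fun i => INR (fact (i + k))) k) by (apply prodR_pos; intros; apply lt_0_INR, lt_O_fact).
 assert (0 < prodR (fun i => INR (fact i)) k) by (apply prodR_pos; intros; apply lt_0_INR, lt_O_fact).
 rewrite E. field. lra. Qed.

Lemma gO_val k : g_O (INR k) = INR (AO k) / INR (BO k).
Proof. unfold g_O, B_O.
 replace (1 + / 2 * INR k * (INR k - 1)) with (INR (S (tri k))) by (rewrite S_INR, tri_INR; field).
 rewrite Gamma_nat, GO_val. unfold AO, BO. rewrite !mult_INR, !INR_prodN.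
 rewrite (prodR_ext _ (fun m => INR (2 * fact m * 2 ^ m) / INR (fact (2 * m))) k).
 2:{ intros. unfold cO. rewrite !mult_INR, pow_INR. replace (INR 2) with 2 by (simpl; ring). field. apply not_0_INR, fact_neq_0. }
 rewrite prodR_div.
 assert (0 < prodR (fun m => INR (fact (2 * m))) k) by (apply prodR_pos; intros; apply lt_0_INR, lt_O_fact).
 simpl (INR 2). field. lra. Qed.

Theorem proposition5p4 (p k : nat) :
  prime (Z.of_nat p) -> Nat.odd p = true -> (0 < k)%nat ->
  (exists vU : Z, vp_is p (g_U (INR k)) vU /\
     is_series (fun n => termU p k (S n)) (IZR vU)) /\
  (exists vO : Z, vp_is p (g_O (INR k)) vO /\
     is_series (fun n => termO p k (S n)) (IZR vO)).
Proof.
 intros pp podd Hk.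
 assert (p2 : (2 <= p)%nat) by (assert (H := prime_ge_2 _ pp); lia).
 assert (pn2 : p <> 2%nat) by (intro E; subst; discriminate).
 assert (Hodd : forall l, exists t, (p ^ S l = 2 * t + 1)%nat /\ (1 <= t)%nat).
 { intros l. assert (O : Nat.odd (p ^ S l) = true) by (rewrite Nat.odd_pow by lia; exact podd).
   apply Nat.odd_spec in O. destruct O as [t Ht]. exists t. split. exact Ht.
   assert (p <= p ^ S l)%nat by (simpl; assert (0 < p ^ l)%nat by (apply Nat.neq_0_lt_0, Nat.pow_nonzero; lia); nia).
   assert (p <> 2%nat) by auto. lia. }
 split.
 - exists (Z.of_nat (MC.vlog p (AU k)) - Z.of_nat (MC.vlog p (BU k)))%Z. split.
   + rewrite gU_val. apply vp_of. exact pp.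
     unfold AU. assert (0 < fact (k * k))%nat by apply lt_O_fact. assert (0 < prodN fact k)%nat by (apply prodN_pos; intros; apply lt_O_fact). nia.
     unfold BU. apply prodN_pos; intros; apply lt_O_fact.
   + set (L := (k * k + 2 * k)%nat).
     assert (E : IZR (Z.of_nat (MC.vlog p (AU k)) - Z.of_nat (MC.vlog p (BU k))) = sumR (fun n => termU p k (S n)) L).
     { rewrite (sumR_ext _ (fun n => INR (k * k / p ^ S n) + 2 * INR (SS (p ^ S n) k) - INR (SS (p ^ S n) (2 * k))) L)
         by (intros; apply termU_eq; lia).
       rewrite sumR_lin3. rewrite minus_IZR, <- !INR_IZR_INZ.
       rewrite (vU1 p k pp), sumN_add. assert (V2 := vU2 p k pp). fold L in V2 |- *.
       apply (f_equal INR) in V2. rewrite !plus_INR in *. lra. }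
     rewrite E. apply series_fin. intros. apply termU_tail; lia.
 - exists (Z.of_nat (MC.vlog p (AO k)) - Z.of_nat (MC.vlog p (BO k)))%Z. split.
   + rewrite gO_val. apply vp_of. exact pp.
     unfold AO. assert (0 < fact (tri k))%nat by apply lt_O_fact.
     assert (0 < prodN (fun m => 2 * fact m * 2 ^ m) k)%nat.
     { apply prodN_pos; intros. assert (0 < fact i)%nat by apply lt_O_fact.
       assert (0 < 2 ^ i)%nat by (apply Nat.neq_0_lt_0, Nat.pow_nonzero; lia). nia. }
     nia.
     unfold BO. assert (0 < prodN (fun m => fact (2 * m)) k)%nat by (apply prodN_pos; intros; apply lt_O_fact). lia.
   + set (L := (tri k + 2 * k)%nat).
     assert (E : IZR (Z.of_nat (MC.vlog p (AO k)) - Z.of_nat (MC.vlog p (BO k))) = sumR (fun n => termO p k (S n)) L).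
     { rewrite (sumR_ext _ (fun n => INR (tri k / p ^ S n) + 2 * INR (SS (p ^ S n) k) - INR (SS2 (p ^ S n) k + SS (p ^ S n) k)) L).
       - rewrite sumR_lin3. rewrite minus_IZR, <- !INR_IZR_INZ.
         rewrite (vO1 p k pp pn2), (vO2 p k pp pn2), sumN_add. fold L.
         rewrite (sumN_add (fun l => SS2 (p ^ S l) k) (fun l => SS (p ^ S l) k)).
         rewrite !plus_INR. ring.
       - intros n _. destruct (Hodd n) as [t [Ht Ht1]].
         rewrite (termO_eq p k (S n) t) by lia. rewrite (SS2_eq _ t k Ht). rewrite !plus_INR. ring. }
     rewrite E. apply series_fin. intros n Hn. destruct (Hodd n) as [t [Ht Ht1]].
     apply (termO_tail p k n t); lia.
Qed.
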